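(* Let $a=p^\gamma$ where $p$ is an odd prime and $\gamma\ge1$. Let $G=(\mathbb{Z}/a\mathbb{Z})^*$ and let $H$ be the maximal subgroup of $G$ of odd order (equivalently, the unique maximal subgroup of $G$ not containing the class of $-1$). Then \[ \{n\in\mathbb{N}:\ \text{every prime } q \text{ dividing } n \text{ satisfies } q \bmod a\in H\}\subseteq\mathcal{E}^*_a . \]
   Context: For a positive integer $n$, let $R(n;a)$ be the number of pairs $(x,y)$ of positive integers with $\frac{a}{n}=\frac1x+\frac1y$. Let $\mathcal{E}^*_a=\{n\in\mathbb{N}: R(n;a)=0,\ \gcd(n,a)=1\}$. If $\phi(a)=2^m d$ with $d$ odd and $g$ is a primitive root modulo $a$, then $H=\{g^{2^m j}:1\le j\le d\}$, of index $2^m$ in $G$. *)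

(* Defs.v *)
From mathcomp Require Import all_boot all_order all_algebra all_fingroup all_solvable.
Set Implicit Arguments. Unset Strict Implicit. Unset Printing Implicit Defensive.
Import GRing.Theory Num.Theory.

(* Existence of a representation a/n = 1/x + 1/y with x, y positive integers;
   R(n;a) = 0 iff this fails. Equation taken in the rationals. *)
Definition has_repr (n a : nat) : Prop :=
  exists x y : nat, (0 < x)%N /\ (0 < y)%N /\
    ((a%:R / n%:R : rat) = 1 / x%:R + 1 / y%:R)%R.

Definition Estar (a : nat) : nat -> Prop :=
  fun n => (0 < n)%N /\ ~ has_repr n a /\ coprime n a.

(* G = ('Z/a'Z)^* ; H = the maximal subgroup of G of odd order, i.e. the
   2'-core (largest normal 2'-subgroup) of the abelian group G. *)
Definition Hodd (a : nat) : {set {unit 'Z_a}} :=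
  'O_(2^')([set: {unit 'Z_a}])%g.

Definition res_in_H (a q : nat) : Prop :=
  exists u : {unit 'Z_a}, (FinRing.uval u = (q%:R : 'Z_a))%R /\ u \in Hodd a.

(* Main.v *)
Require Import Defs.
From mathcomp Require Import all_boot all_order all_algebra all_fingroup all_solvable.
From mathcomp Require Import ring.
From mathcomp Require Import zify.
Import GRing.Theory Num.Theory.

Lemma Zp_natr0 (a k : nat) : (1 < a)%N -> ((k%:R : 'Z_a) = 0)%R <-> (a %| k)%N.
Proof.
move=> a1; rewrite Zp_nat; split.
  by move/(congr1 val) => /=; rewrite Zp_cast // => /eqP.
by move=> h; apply: val_inj => /=; rewrite Zp_cast //; apply/eqP.
Qed.

Lemma divs_in_H a n : (1 < a)%N -> (0 < n)%N ->
  (forall q, prime q -> q %| n -> res_in_H a q) ->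
  forall d, d %| n -> res_in_H a d.
Proof.
move=> a1 n0 hq d.
elim: d {-2}d (leqnn d) => [|m IH] d.
  by rewrite leqn0 => /eqP ->; rewrite dvd0n => /eqP h; rewrite h in n0.
move=> dm dn.
case: (ltngtP d 1) => [|d1|->].
- rewrite ltnS leqn0 => /eqP d0; move: dn; rewrite d0 dvd0n => /eqP h; by rewrite h in n0.
- have pq := pdiv_prime d1.
  have qd := pdiv_dvd d.
  have d0 : (0 < d)%N by apply: ltnW.
  have [u [hu uH]] := hq _ pq (dvdn_trans qd dn).
  have dq : (d %/ pdiv d < d)%N by apply: ltn_Pdiv; [apply: prime_gt1|].
  have dqn : d %/ pdiv d %| n.
    apply: dvdn_trans dn; apply/dvdnP; exists (pdiv d); by rewrite mulnC divnK.
  have [v [hv vH]] := IH (d %/ pdiv d) (leq_trans (ltnSE (leq_trans dq dm)) (leqnn m)) dqn.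
  exists (u * v)%g; split; last by rewrite groupM.
  rewrite -[FinRing.uval (u*v)%g]/(FinRing.uval u * FinRing.uval v)%R. rewrite hu hv -natrM mulnC divnK //.
- exists 1%g; split; first by []. by rewrite group1.
Qed.

Local Open Scope ring_scope.
Lemma repr_nat (a n x y : nat) : (0 < n)%N -> (0 < x)%N -> (0 < y)%N ->
  ((a%:R / n%:R : rat) = 1 / x%:R + 1 / y%:R)%R -> (a * x * y = n * (x + y))%N.
Proof.
move=> n0 x0 y0 E.
have nz : (n%:R : rat) != 0%R by rewrite pnatr_eq0 -lt0n.
have xz : (x%:R : rat) != 0%R by rewrite pnatr_eq0 -lt0n.
have yz : (y%:R : rat) != 0%R by rewrite pnatr_eq0 -lt0n.
apply/eqP; rewrite -(eqr_nat rat) !natrM natrD; apply/eqP.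
have -> : (a%:R * x%:R * y%:R : rat)%R = (a%:R / n%:R * n%:R * x%:R * y%:R)%R.
  by rewrite divfK.
rewrite E !mulrDl !div1r.
have hx := mulVf xz; have hy := mulVf yz.
transitivity ((x%:R^-1 * x%:R) * n%:R * y%:R + (y%:R^-1 * y%:R) * n%:R * x%:R : rat); first ring.
rewrite hx hy; ring.
Qed.
Local Close Scope ring_scope.

Theorem lemma2p3 (p gamma : nat) :
  prime p -> odd p -> (0 < gamma)%N ->
  forall n : nat, (0 < n)%N ->
    (forall q : nat, prime q -> q %| n -> res_in_H (p ^ gamma) q) ->
    Estar (p ^ gamma) n.
Proof.
move=> pp op g0 n n0 hq.
set a := p ^ gamma.
have p1 := prime_gt1 pp.
have p3 : (2 < p)%N.
  have : p != 2 by apply/eqP => e; rewrite e in op.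
  lia.
have pa : (p <= a)%N.
  rewrite /a; move: g0; case: (gamma) => // g _; rewrite expnS; apply: leq_pmulr.
  by rewrite expn_gt0 ltnW.
have a1 : (1 < a)%N by lia.
have cna : coprime n a.
  rewrite /a coprime_pexpr // coprime_sym prime_coprime //.
  apply/negP => pn.
  have [u [hu _]] := hq _ pp pn.
  have := valP u; rewrite /= -[val u]/(FinRing.uval u) hu unitZpE // /a coprime_pexpl // => cpp.
  by move: cpp; rewrite /coprime gcdnn => /eqP e; rewrite e in p1.
split=> //; split=> //.
move=> [x [y [x0 [y0 E]]]].
have E' := @repr_nat _ _ _ _ n0 x0 y0 E.
set g := gcdn x y.
have g0' : (0 < g)%N by rewrite gcdn_gt0 x0.
set u := x %/ g; set v := y %/ g.
have xu : x = u * g by rewrite divnK // dvdn_gcdl.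
have yv : y = v * g by rewrite divnK // dvdn_gcdr.
have cuv : coprime u v.
  rewrite /coprime; apply/eqP.
  have : gcdn u v * g = g by rewrite muln_gcdl -xu -yv.
  by move/eqP; rewrite -{2}(mul1n g) eqn_pmul2r // => /eqP.
have E2 : a * u * v * g = n * (u + v).
  apply/eqP; rewrite -(eqn_pmul2r g0'); apply/eqP.
  rewrite xu yv in E'.
  transitivity (a * (u * g) * (v * g)); first ring.
  rewrite E'; ring.
have u0 : (0 < u)%N by move: x0; rewrite xu muln_gt0 => /andP[].
have v0 : (0 < v)%N by move: y0; rewrite yv muln_gt0 => /andP[].
have un : u %| n.
  rewrite -(@Gauss_dvdl u n (u + v)); last by rewrite /coprime gcdnDl.
  by rewrite -E2 -!mulnA; apply: dvdn_mull; apply: dvdn_mulr.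
have vn : v %| n.
  rewrite -(@Gauss_dvdl v n (u + v)); last by rewrite /coprime gcdnDr gcdnC.
  by rewrite -E2 -mulnA; apply: dvdn_mull; apply: dvdn_mulr.
have auv : a %| u + v.
  rewrite -(@Gauss_dvdr a n (u + v)); last by rewrite coprime_sym.
  by rewrite -E2 -!mulnA dvdn_mulr.
have [uu [huu uuH]] := @divs_in_H a n a1 n0 hq _ un.
have [uv [huv uvH]] := @divs_in_H a n a1 n0 hq _ vn.
have s0 : (u%:R + v%:R : 'Z_a)%R = 0%R by rewrite -natrD; apply/(@Zp_natr0 a (u + v) a1).
set w := (uu * uv^-1)%g.
have wH : w \in Hodd a by rewrite groupM // groupV.
have vw : FinRing.uval w = (-1)%R.
  rewrite -[FinRing.uval w]/(FinRing.uval uu * (FinRing.uval uv)^-1)%R.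
  rewrite huu huv.
  have -> : (u%:R : 'Z_a)%R = (- v%:R)%R by apply/eqP; rewrite -subr_eq0 opprK s0.
  rewrite mulNr mulrV //; rewrite -huv; exact: valP.
have w1 : w != 1%g.
  apply/eqP => w1; move: vw; rewrite w1 => /= h.
  have : (2%:R : 'Z_a)%R = 0%R.
    by rewrite -[2]/(1 + 1)%N natrD -[(1%:R)%R]/(1%R : 'Z_a) {2}h subrr.
  move/(@Zp_natr0 a 2 a1) => /dvdn_leq; lia.
have w2 : (w ^+ 2 = 1)%g.
  apply: val_inj; rewrite -[val (w ^+ 2)%g]/(FinRing.uval w * FinRing.uval w)%R.
  by rewrite vw mulrNN mulr1.
have ow : #[w]%g = 2.
  have : #[w]%g %| 2 by rewrite order_dvdn w2.
  have := order_gt1 w; rewrite w1 => o1 /dvdn_leq; lia.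
have := mem_p_elt (pcore_pgroup _ _) wH.
by rewrite /p_elt ow.
Qed.
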